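(* Let $x\in[0,1)$, $\alpha\in(0,1)$ and $\lambda>0$, and suppose $\alpha<1-\frac{1}{\lambda(1-x)}$. Then the rumor has a positive steady state, i.e. the equation $\theta_1=(1-x)(1-\alpha)\frac{\lambda\theta_1}{1+\lambda\theta_1}$ has a positive solution $\theta_1>0$. This positive steady state is decreasing in $\alpha$ and in $x$ and increasing in $\lambda$, and it does not depend on the prevalence $\theta_0$ of the truth.
   Context: Model: a continuum population of mass $1$; a mass $x\in[0,1]$ of agents are of type $0$ (biased towards the truth, message $m=0$) and a mass $1-x$ are of type $1$ (biased towards the rumor, message $m=1$). In each type, a fraction $\alpha\in(0,1)$ of agents inspect messages. An agent who does not inspect believes (and transmits) only the message matching her type and ignores the other; an inspecting agent believes and transmits the truth upon receiving either message. Each agent has $k$ meetings per unit of time, each transmitting a message with rate $\nu$, and informed agents die at rate $\delta$ and are replaced by uninformed agents; set $\lambda=k\nu/\delta$. Let $\rho^{\alpha}_{0,0},\rho^{1-\alpha}_{0,0},\rho^{\alpha}_{1,0},\rho^{1-\alpha}_{1,1}\in[0,1]$ be respectively the fractions of inspecting type-0 agents believing the truth, non-inspecting type-0 agents believing the truth, inspecting type-1 agents believing the truth, and non-inspecting type-1 agents believing the rumor. The prevalences are $\theta_0=x[\alpha\rho^{\alpha}_{0,0}+(1-\alpha)\rho^{1-\alpha}_{0,0}]+(1-x)\alpha\rho^{\alpha}_{1,0}$ (truth) and $\theta_1=(1-x)(1-\alpha)\rho^{1-\alpha}_{1,1}$ (rumor). The dynamics are $\dot\rho^{\alpha}_{0,0}=x\alpha[(1-\rho^{\alpha}_{0,0})k\nu(\theta_0+\theta_1)-\rho^{\alpha}_{0,0}\delta]$,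 $\dot\rho^{1-\alpha}_{0,0}=x(1-\alpha)[(1-\rho^{1-\alpha}_{0,0})k\nu\theta_0-\rho^{1-\alpha}_{0,0}\delta]$, $\dot\rho^{\alpha}_{1,0}=(1-x)\alpha[(1-\rho^{\alpha}_{1,0})k\nu(\theta_0+\theta_1)-\rho^{\alpha}_{1,0}\delta]$, $\dot\rho^{1-\alpha}_{1,1}=(1-x)(1-\alpha)[(1-\rho^{1-\alpha}_{1,1})k\nu\theta_1-\rho^{1-\alpha}_{1,1}\delta]$. A steady state is a rest point of these dynamics; at a steady state $\rho^{1-\alpha}_{1,1}=\frac{\lambda\theta_1}{1+\lambda\theta_1}$, so the steady-state rumor prevalence solves $\theta_1=(1-x)(1-\alpha)\frac{\lambda\theta_1}{1+\lambda\theta_1}$. *)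

(* Defs.v *)
From Stdlib Require Import Reals Lra.
Open Scope R_scope.

(* Steady-state equation for the rumor prevalence theta1 (lam = k nu / delta). *)
Definition rumor_eq (x a lam t : R) : Prop :=
  t = (1 - x) * (1 - a) * (lam * t / (1 + lam * t)).

Definition params_ok (x a lam : R) : Prop :=
  0 <= x < 1 /\ 0 < a < 1 /\ 0 < lam /\ a < 1 - 1 / (lam * (1 - x)).

Definition theta0 (x a r00a r00n r10a : R) : R :=
  x * (a * r00a + (1 - a) * r00n) + (1 - x) * a * r10a.
Definition theta1 (x a r11 : R) : R := (1 - x) * (1 - a) * r11.

Definition rest_point (x a k nu delta r00a r00n r10a r11 : R) : Prop :=
  let th0 := theta0 x a r00a r00n r10a in
  let th1 := theta1 x a r11 in
  x * a * ((1 - r00a) * k * nu * (th0 + th1) - r00a * delta) = 0 /\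
  x * (1 - a) * ((1 - r00n) * k * nu * th0 - r00n * delta) = 0 /\
  (1 - x) * a * ((1 - r10a) * k * nu * (th0 + th1) - r10a * delta) = 0 /\
  (1 - x) * (1 - a) * ((1 - r11) * k * nu * th1 - r11 * delta) = 0.

Definition in01 (r : R) : Prop := 0 <= r <= 1.

(* Main.v *)
Require Import Defs.
From Stdlib Require Import Reals Lra.
Open Scope R_scope.

Lemma key x a lam t : 0 < lam -> 0 < t -> rumor_eq x a lam t ->
  t = (1 - x) * (1 - a) - / lam.
Proof.
  unfold rumor_eq; intros Hl Ht E.
  assert (H1 : 0 < 1 + lam * t) by nra.
  assert (E2 : t * (1 + lam * t) = (1 - x) * (1 - a) * (lam * t)).
  { rewrite E at 1. field. lra. }
  apply Rmult_eq_reg_l with (lam * t); [|nra].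
  field_simplify; [|lra]. nra.
Qed.

Lemma cpos x a lam : params_ok x a lam -> / lam < (1 - x) * (1 - a).
Proof.
  unfold params_ok; intros [[H0 H1] [[H2 H3] [H4 H5]]].
  assert (0 < lam * (1 - x)) by nra.
  assert (1 / (lam * (1 - x)) < 1 - a) by lra.
  apply Rmult_lt_compat_r with (r := 1 - x) in H6; [|lra].
  replace (1 / (lam * (1 - x)) * (1 - x)) with (/ lam) in H6 by (field; lra).
  lra.
Qed.

Theorem lemma1 :
  (* existence (and uniqueness) of a positive steady state *)
  (forall x a lam, params_ok x a lam ->
     exists t, 0 < t /\ rumor_eq x a lam t /\
       (forall t', 0 < t' -> rumor_eq x a lam t' -> t' = t)) /\
  (* strictly decreasing in alpha *)
  (forall x a a' lam t t', params_ok x a lam -> params_ok x a' lam -> a < a' ->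
     0 < t -> rumor_eq x a lam t -> 0 < t' -> rumor_eq x a' lam t' -> t' < t) /\
  (* strictly decreasing in x *)
  (forall x x' a lam t t', params_ok x a lam -> params_ok x' a lam -> x < x' ->
     0 < t -> rumor_eq x a lam t -> 0 < t' -> rumor_eq x' a lam t' -> t' < t) /\
  (* strictly increasing in lambda *)
  (forall x a lam lam' t t', params_ok x a lam -> params_ok x a lam' -> lam < lam' ->
     0 < t -> rumor_eq x a lam t -> 0 < t' -> rumor_eq x a lam' t' -> t < t') /\
  (* independence of theta0: at any rest point of the full dynamics with positive
     rumor prevalence, theta1 solves the theta0-free steady-state equation
     (hence equals the unique positive solution above) *)
  (forall x a k nu delta r00a r00n r10a r11,
     0 < k -> 0 < nu -> 0 < delta -> params_ok x a (k * nu / delta) ->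
     in01 r00a -> in01 r00n -> in01 r10a -> in01 r11 ->
     rest_point x a k nu delta r00a r00n r10a r11 ->
     0 < theta1 x a r11 ->
     rumor_eq x a (k * nu / delta) (theta1 x a r11)).
Proof.
  split; [|split; [|split; [|split]]].
  - intros x a lam P. pose proof (cpos _ _ _ P) as C.
    destruct P as [_ [_ [Hl _]]].
    exists ((1 - x) * (1 - a) - / lam). split; [lra|split].
    + unfold rumor_eq. field. split; [lra|].
      replace (1 + lam * ((1 - x) * (1 - a) - / lam)) with (lam * ((1 - x) * (1 - a))) by (field; lra).
      assert (0 < (1 - x) * (1 - a)) by (pose proof (Rinv_0_lt_compat lam Hl); lra).
      nra.
    + intros t' Ht E. apply key; auto.
  - intros x a a' lam t t' P P' Ha Ht E Ht' E'.
    pose proof P as [[? ?] [? [Hl _]]].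
    rewrite (key _ _ _ _ Hl Ht E), (key _ _ _ _ Hl Ht' E'). nra.
  - intros x x' a lam t t' P P' Ha Ht E Ht' E'.
    pose proof P as [[? ?] [[? ?] [Hl _]]].
    rewrite (key _ _ _ _ Hl Ht E), (key _ _ _ _ Hl Ht' E'). nra.
  - intros x a lam lam' t t' P P' Ha Ht E Ht' E'.
    pose proof P as [_ [_ [Hl _]]].
    assert (Hl' : 0 < lam') by lra.
    rewrite (key _ _ _ _ Hl Ht E), (key _ _ _ _ Hl' Ht' E').
    assert (/ lam' < / lam) by (apply Rinv_lt_contravar; nra). lra.
  - intros x a k nu delta r00a r00n r10a r11 Hk Hn Hd P _ _ _ I R Hth.
    destruct P as [[? ?] [[? ?] _]].
    destruct R as [_ [_ [_ R4]]].
    unfold rumor_eq. unfold theta1 in *.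
    set (c := (1 - x) * (1 - a)) in *.
    assert (Hc : 0 < c) by (unfold c; apply Rmult_lt_0_compat; lra).
    assert (R : (1 - r11) * k * nu * (c * r11) - r11 * delta = 0).
    { apply Rmult_integral in R4 as [R4|R4]; [|exact R4].
      exfalso. lra. }
    assert (Hr : 0 < r11) by (apply (Rmult_lt_reg_l c); lra).
    assert (0 < k * nu) by nra.
    set (t := c * r11) in *.
    assert (Ht : 0 < k * nu * t) by (apply Rmult_lt_0_compat; lra).
    assert (E : r11 = k * nu / delta * t / (1 + k * nu / delta * t)).
    { apply Rmult_eq_reg_r with (delta + k * nu * t); [|lra].
      field_simplify; [lra|split; lra]. }
    unfold t at 1. rewrite E at 1. reflexivity.
Qed.
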